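(* Let $n\ge2$ be even and $1\le\kappa<n$. For $q\in\{2,4\}$ let $A_{\mathrm{BAL},\kappa\text{-WMU},q,n}$ denote the maximum size of a balanced $\kappa$-WMU code in $\mathbb{F}_q^n$, and let $A_{\mathrm{BAL},\mathrm{MU},2,n}$ denote the maximum size of a balanced MU code in $\mathbb{F}_2^n$. Then (i) $c_2\,\frac{\binom{n}{n/2}2^n}{n-\kappa+1}\le A_{\mathrm{BAL},\kappa\text{-WMU},4,n}\le\frac{\binom{n}{n/2}2^n}{n-\kappa+1}$, where $c_2=\frac{3}{64}$; (ii) $A_{\mathrm{BAL},\kappa\text{-WMU},2,n}\le\frac{\binom{n}{n/2}}{n-\kappa+1}$; (iii) $\frac{\binom{n}{n/2}}{2(n-1)}\le A_{\mathrm{BAL},\mathrm{MU},2,n}\le\frac{\binom{n}{n/2}}{n}$.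
   Context: $\mathbb{F}_2=\{0,1\}$ and $\mathbb{F}_4$ is identified with $\{\mathtt{A},\mathtt{T},\mathtt{C},\mathtt{G}\}$. A binary sequence of length $n$ is balanced if exactly $n/2$ entries are $1$; a quaternary (DNA) sequence of length $n$ is balanced if exactly $n/2$ entries lie in $\{\mathtt{G},\mathtt{C}\}$; a code is balanced if every codeword is. A code $\mathcal{C}\subseteq\mathbb{F}_q^n$ is $\kappa$-WMU if for all not necessarily distinct $\mathbf{a},\mathbf{b}\in\mathcal{C}$ and all $\kappa\le l<n$, $(a_1,\dots,a_l)\ne(b_{n-l+1},\dots,b_n)$; an MU (mutually uncorrelated) code is a $1$-WMU code, i.e. no proper prefix of any codeword equals a suffix of any codeword. *)

(* Defs.v *)
From mathcomp Require Import all_boot all_order all_algebra.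
Set Implicit Arguments. Unset Strict Implicit. Unset Printing Implicit Defensive.

(* Words of length n over a finite alphabet T are n-tuples.
   F_2 = 'I_2 ; F_4 = 'I_4 with the identification 0=A, 1=T, 2=C, 3=G. *)

(* the "heavy" symbols: 1 in F_2, and {C,G} = {2,3} in F_4 *)
Definition heavy2 : pred 'I_2 := fun x => val x == 1%N.
Definition heavyGC : pred 'I_4 := fun x => (2 <= val x)%N.

Definition balanced_word (T : finType) (heavy : pred T) (n : nat)
  (w : n.-tuple T) : bool := count heavy w == n./2.

Definition balanced_code (T : finType) (heavy : pred T) (n : nat)
  (C : {set n.-tuple T}) : bool := [forall w in C, balanced_word heavy w].

Definition wmu_code (T : finType) (kappa n : nat) (C : {set n.-tuple T}) : bool :=
  [forall a in C, forall b in C, forall l : 'I_n,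
     (kappa <= l)%N ==> (take l a != drop (n - l) b)].

Definition mu_code (T : finType) (n : nat) (C : {set n.-tuple T}) : bool :=
  wmu_code 1 C.

Definition A_bal_wmu (T : finType) (heavy : pred T) (kappa n : nat) : nat :=
  \max_(C : {set n.-tuple T} | balanced_code heavy C && wmu_code kappa C) #|C|.

Definition A_bal_mu (T : finType) (heavy : pred T) (n : nat) : nat :=
  \max_(C : {set n.-tuple T} | balanced_code heavy C && mu_code C) #|C|.

(* Main.v *)
Require Import Defs.
From mathcomp Require Import all_boot all_order all_algebra.
From mathcomp Require Import zify.
Set Implicit Arguments. Unset Strict Implicit. Unset Printing Implicit Defensive.

Lemma take_drop_nthP (T : Type) (x0 : T) (n l : nat) (a b : seq T) :
  size a = n -> size b = n -> l <= n ->
  (take l a = drop (n - l) b) <-> (forall j, j < l -> nth x0 a j = nth x0 b (n - l + j)).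
Proof.
move=> sa sb ln; split.
- move=> e j jl; by rewrite -(nth_take x0 jl) e nth_drop.
- move=> h; apply: (eq_from_nth (x0:=x0)).
  + rewrite size_takel ?sa // size_drop sb; lia.
  + move=> j; rewrite size_takel ?sa // => jl; rewrite nth_take // nth_drop; exact: h.
Qed.

Lemma wmuP (T : finType) (kappa n : nat) (C : {set n.-tuple T}) :
  wmu_code kappa C ->
  forall a b, a \in C -> b \in C -> forall l, kappa <= l -> l < n -> take l a != drop (n - l) b.
Proof.
move=> /forall_inP H a b aC bC l kl ln.
have := H a aC => /forall_inP /(_ b bC) /forallP /(_ (Ordinal ln)) /implyP; exact.
Qed.

Lemma wmuI (T : finType) (kappa n : nat) (C : {set n.-tuple T}) :
  (forall a b, a \in C -> b \in C -> forall l, kappa <= l -> l < n -> take l a != drop (n - l) b) ->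
  wmu_code kappa C.
Proof.
move=> H; apply/forall_inP => a aC; apply/forall_inP => b bC; apply/forallP => l.
apply/implyP => kl; exact: H.
Qed.

Lemma rot_bound (T : finType) (heavy : pred T) (kappa n : nat) (C : {set n.-tuple T}) :
  balanced_code heavy C -> wmu_code kappa C -> 1 <= kappa -> kappa < n ->
  #|C| * (n - kappa + 1) <= #|[set w : n.-tuple T | balanced_word heavy w]|.
Proof.
move=> /forall_inP bal wmu k1 kn.
have key : forall (a b : n.-tuple T) (s s' : nat), a \in C -> b \in C -> s <= s' -> s' <= n - kappa ->
    rot s a = rot s' b -> a = b /\ s = s'.
  move=> a b s s' aC bC ss' s'n e.
  have e2 : rot s' b = rot s (rot (s' - s) b) by rewrite -rotD ?size_tuple; [congr rot; lia| lia].
  rewrite e2 in e; have {e} /rot_inj e := e.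
  case d0 : (s' - s == 0).
    move/eqP: d0 => d0; rewrite d0 rot0 in e; split; [exact: val_inj | lia].
  exfalso.
  have := wmuP wmu aC bC (l := n - (s' - s)) _ _.
  have -> : n - (n - (s' - s)) = s' - s by lia.
  rewrite e /rot take_size_cat ?eqxx //; last by rewrite size_drop size_tuple.
  move=> H; have : false := H ltac:(lia) ltac:(lia). done.
pose f (x : n.-tuple T * 'I_(n - kappa + 1)) : n.-tuple T := rot_tuple x.2 x.1.
have <- : #|setX C [set: 'I_(n - kappa + 1)]| = #|C| * (n - kappa + 1) by rewrite cardsX cardsT card_ord.
rewrite -(card_in_imset (f := f)).
  apply: subset_leq_card; apply/subsetP => w /imsetP [[a s]] /setXP [aC _] ->.
  rewrite inE /balanced_word /f /=.
  have hp : perm_eq (rot s a) a by rewrite perm_rot.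
  by rewrite (permP hp); exact: bal a aC.
move=> [a s] [b s'] /setXP [aC _] /setXP [bC _] /(congr1 val) /= e.
have hs := ltn_ord s; have hs' := ltn_ord s'.
case: (leqP s s') => hss.
  have [-> ?] := key a b s s' aC bC hss ltac:(lia) e.
  by congr pair; apply: val_inj.
have [-> ?] := key b a s' s bC aC ltac:(lia) ltac:(lia) (esym e).
by congr pair; apply: val_inj.
Qed.

Lemma count_card (T : finType) n (p : pred T) (w : n.-tuple T) :
  count p w = #|[set i : 'I_n | p (tnth w i)]|.
Proof.
rewrite -{1}(map_tnth_enum w) enumT count_map cardsE cardE /enum_mem size_filter.
by apply: eq_count => i.
Qed.

Definition b2 (b : bool) : 'I_2 := if b then ord_max else ord0.
Lemma heavy2_b2 b : heavy2 (b2 b) = b. Proof. by case: b. Qed.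
Lemma b2K (x : 'I_2) : b2 (heavy2 x) = x.
Proof. by case: x => [[|[|k]] h] //; apply: val_inj. Qed.

Definition psi n (A : {set 'I_n}) : n.-tuple 'I_2 := [tuple b2 (i \in A) | i < n].

Lemma card_bal2 n : #|[set w : n.-tuple 'I_2 | balanced_word heavy2 w]| = 'C(n, n./2).
Proof.
have inj : injective (@psi n).
  move=> A B e; apply/setP => i; have := congr1 (fun t => tnth t i) e.
  by rewrite !tnth_mktuple => /(congr1 heavy2); rewrite !heavy2_b2.
have cnt : forall A : {set 'I_n}, count heavy2 (psi A) = #|A|.
  move=> A; rewrite count_card; apply: eq_card => i; by rewrite !inE tnth_mktuple heavy2_b2.
rewrite -[X in 'C(X, _)](card_ord n) -card_draws -(card_imset _ inj).
apply: eq_card => w; rewrite inE /balanced_word.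
apply/idP/imsetP.
- move=> bw; exists [set i | heavy2 (tnth w i)]; first by rewrite inE -(count_card heavy2 w).
  apply: eq_from_tnth => i; by rewrite tnth_mktuple inE b2K.
- by move=> [A]; rewrite inE => /eqP hA ->; rewrite cnt hA.
Qed.

Definition hp n (w : n.-tuple 'I_4) : n.-tuple 'I_2 := [tuple b2 (heavyGC (tnth w i)) | i < n].
Definition lo n (w : n.-tuple 'I_4) : n.-tuple 'I_2 := [tuple b2 (odd (tnth w i)) | i < n].

Lemma card_bal4 n : #|[set w : n.-tuple 'I_4 | balanced_word heavyGC w]| <= 'C(n, n./2) * 2 ^ n.
Proof.
rewrite -card_bal2 -[X in _ * X ^ n](card_ord 2) -card_tuple -cardsT -cardsX.
rewrite -(card_in_imset (f := fun w => (hp w, lo w))).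
  apply: subset_leq_card; apply/subsetP => x /imsetP [w]; rewrite inE => bw ->.
  apply/setXP; split => //; rewrite inE /balanced_word count_card -(eqP bw) count_card.
  apply/eqP; apply: eq_card => i; by rewrite !inE tnth_mktuple heavy2_b2.
move=> w1 w2 _ _ e; apply: eq_from_tnth => i.
have := congr1 (fun x => tnth x.1 i) e; have := congr1 (fun x => tnth x.2 i) e.
rewrite /= !tnth_mktuple => /(congr1 heavy2) + /(congr1 heavy2); rewrite !heavy2_b2 /heavyGC.
move=> ho hh; apply: val_inj.
case: (tnth w1 i) (tnth w2 i) ho hh => [a ha] [b hb] /=.
by case: a ha => [|[|[|[|a]]]] ha; case: b hb => [|[|[|[|b]]]] hb.
Qed.

Definition mk4 (x y : 'I_2) : 'I_4 := inord (2 * x + y).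
Lemma mk4_val x y : val (mk4 x y) = 2 * x + y.
Proof. rewrite /mk4 /= inordK //; have:= ltn_ord x; have:= ltn_ord y; lia. Qed.
Lemma heavyGC_mk4 x y : heavyGC (mk4 x y) = heavy2 x.
Proof.
rewrite /heavyGC /heavy2 mk4_val.
by case: x => [[|[|k]] h]; case: y => [[|[|k']] h'].
Qed.
Lemma mk4_inj x1 y1 x2 y2 : mk4 x1 y1 = mk4 x2 y2 -> x1 = x2 /\ y1 = y2.
Proof.
move/(congr1 val); rewrite !mk4_val => e.
have:=ltn_ord x1; have:=ltn_ord x2; have:=ltn_ord y1; have:=ltn_ord y2 => *.
split; apply: val_inj => /=; lia.
Qed.

Definition comb n (p : n.-tuple 'I_2 * n.-tuple 'I_2) : n.-tuple 'I_4 :=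
  [tuple mk4 (tnth p.1 i) (tnth p.2 i) | i < n].

Lemma nth_comb n (p : n.-tuple 'I_2 * n.-tuple 'I_2) j : j < n ->
  nth ord0 (comb p) j = mk4 (nth ord0 p.1 j) (nth ord0 p.2 j).
Proof.
move=> jn.
by rewrite -!(tnth_nth ord0 _ (Ordinal jn)) tnth_mktuple.
Qed.

Lemma comb_inj n : injective (@comb n).
Proof.
move=> [a1 b1] [a2 b2] e.
have h : forall i, tnth a1 i = tnth a2 i /\ tnth b1 i = tnth b2 i.
  move=> i; apply: mk4_inj; have := congr1 (fun t => tnth t i) e; by rewrite !tnth_mktuple.
by congr pair; apply: eq_from_tnth => i; case: (h i).
Qed.

Lemma comb_count n (p : n.-tuple 'I_2 * n.-tuple 'I_2) : count heavyGC (comb p) = count heavy2 p.1.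
Proof.
rewrite !count_card; apply: eq_card => i; by rewrite !inE tnth_mktuple heavyGC_mk4.
Qed.

Lemma comb_overlap n (p1 p2 : n.-tuple 'I_2 * n.-tuple 'I_2) l : l < n ->
  take l (comb p1) = drop (n - l) (comb p2) ->
  take l p1.1 = drop (n - l) p2.1 /\ take l p1.2 = drop (n - l) p2.2.
Proof.
move=> ln /(take_drop_nthP ord0 (size_tuple _) (size_tuple _) (ltnW ln)) h.
have h' : forall j, j < l -> nth ord0 p1.1 j = nth ord0 p2.1 (n - l + j) /\
                             nth ord0 p1.2 j = nth ord0 p2.2 (n - l + j).
  move=> j jl; apply: mk4_inj; rewrite -!nth_comb; [exact: h | lia | lia].
split; apply/(take_drop_nthP ord0 (size_tuple _) (size_tuple _) (ltnW ln)) => j jl; by case: (h' j jl).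
Qed.

Lemma comb_wmu n kappa (H E : {set n.-tuple 'I_2}) :
  wmu_code kappa H \/ wmu_code kappa E -> wmu_code kappa (@comb n @: setX H E).
Proof.
move=> hw; apply: wmuI => a b /imsetP [[h1 e1] /setXP [h1H e1E] ->] /imsetP [[h2 e2] /setXP [h2H e2E] ->] l kl ln.
apply/negP => /eqP /(comb_overlap ln) [/= o1 o2].
case: hw => hw.
  by have := wmuP hw h1H h2H kl ln; rewrite o1 eqxx.
by have := wmuP hw e1E e2E kl ln; rewrite o2 eqxx.
Qed.

Lemma comb_card n (H E : {set n.-tuple 'I_2}) : #|@comb n @: setX H E| = #|H| * #|E|.
Proof. by rewrite card_imset ?cardsX //; exact: comb_inj. Qed.

Lemma comb_bal n (H E : {set n.-tuple 'I_2}) :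
  balanced_code heavy2 H -> balanced_code heavyGC (@comb n @: setX H E).
Proof.
move=> /forall_inP hb; apply/forall_inP => w /imsetP [[h e] /setXP [hH _] ->].
by rewrite /balanced_word comb_count; exact: hb.
Qed.

Notation ones s := (count heavy2 s).

Lemma lex_aux X Y a b M : X * M + a <= Y * M + b -> a < M -> b < M -> X <= Y /\ (X = Y -> a <= b).
Proof.
move=> h aM bM; split.
  rewrite leqNgt; apply/negP => XY.
  have : (Y.+1) * M <= X * M by rewrite leq_mul2r XY orbT.
  rewrite mulSn; move: h; move: (X * M) (Y * M) => P Q; lia.
by move=> e; rewrite e leq_add2l in h.
Qed.

Lemma cycle_lemma (u : seq 'I_2) N : size u = N -> 0 < N -> 2 * ones u = N.+1 ->
  exists2 r, r < N & forall j, 0 < j -> j <= N -> j < 2 * ones (take j (rot r u)).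
Proof.
move=> su N0 tot.
pose c i := ones (take i u).
have cle : forall i, c i <= i.
  move=> i; apply: (leq_trans (count_size _ _)); rewrite size_take; case: ifP => //; lia.
pose K (i : 'I_N) := (2 * c i + N - i) * N.+1 + (N - i).
have [r _ Hr] := @arg_minnP _ (Ordinal N0) predT K isT.
have HA : forall i, i < N -> 2 * c r + i <= 2 * c i + r /\ (r < i -> 2 * c r + i < 2 * c i + r).
  move=> i iN; have := Hr (Ordinal iN) isT; rewrite /K /=.
  move/lex_aux => /(_ ltac:(lia) ltac:(lia)) [h1 h2].
  have := ltn_ord r; have := cle i; have := cle r => *.
  split; first by lia.
  move=> ri; case: (ltngtP (2 * c r + N - r) (2 * c i + N - i)) => [hlt | hgt | heq]; [lia | lia |].
  have := h2 heq; lia.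
have cN : c N = ones u by rewrite /c take_oversize ?su.
have c0 : c 0 = 0 by rewrite /c take0.
have rN := ltn_ord r.
exists r => // j j0 jN.
have cD : forall i k, c (i + k) = c i + ones (take k (drop i u)).
  by move=> i k; rewrite /c takeD count_cat.
have onesD : ones u = c r + ones (drop r u).
  by rewrite /c -count_cat cat_take_drop.
rewrite /rot take_cat size_drop su.
case: ifP => hj.
  have [_ hB] := HA (r + j) ltac:(lia).
  have := hB ltac:(lia); rewrite cD; lia.
case: (j =P N - r) => [ej | nej].
  rewrite ej subnn take0 cats0.
  have [hA _] := HA 0 N0; rewrite c0 in hA.
  lia.
rewrite count_cat take_takel; last by lia.
have [hA _] := HA (j - (N - r)) ltac:(lia).
rewrite /c in hA onesD; lia.
Qed.

Definition dyck n : {set n.-tuple 'I_2} :=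
  [set w | balanced_word heavy2 w && [forall j : 'I_n, (0 < j) ==> (j < 2 * ones (take j w))]].

Lemma dyck_bal n : balanced_code heavy2 (dyck n).
Proof. by apply/forall_inP => w; rewrite inE => /andP []. Qed.

Lemma dyck_mu n : ~~ odd n -> mu_code (dyck n).
Proof.
move=> ev; apply: wmuI => a b; rewrite !inE => /andP [ba pa] /andP [bb pb] l l1 ln.
apply/negP => /eqP e.
have nl : n - l < n by lia.
have := (forallP pa) (Ordinal ln); have := (forallP pb) (Ordinal nl).
move=> /implyP /= hb /implyP /= ha.
have := ha ltac:(lia); have := hb ltac:(lia).
have cb : ones b = ones (take (n - l) b) + ones (drop (n - l) b) by rewrite -count_cat cat_take_drop.
rewrite -e in cb; move: cb; rewrite (eqP bb).
have := even_halfK ev; rewrite -mul2n; move: (n./2) (count heavy2 (take (n - l) b)) (count heavy2 (take l a)) => h A B; lia.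
Qed.

Definition flip (x : 'I_2) : 'I_2 := b2 (~~ heavy2 x).
Lemma flipK : involutive flip.
Proof. by case=> [[|[|k]] h] //; apply: val_inj. Qed.

Definition gdec n (d : n.-tuple 'I_2) (b : bool) (r : nat) : seq 'I_2 :=
  let s := rotr r (take n.-1 d) ++ [:: ord0] in if b then map flip s else s.
Definition Gdec n (x : n.-tuple 'I_2 * (bool * 'I_n.-1)) : n.-tuple 'I_2 :=
  [tuple nth ord0 (gdec x.1 x.2.1 x.2.2) i | i < n].

Lemma mktuple_nth (T : Type) (x0 : T) n (s : seq T) : size s = n -> val [tuple nth x0 s i | i < n] = s.
Proof.
move=> sn; apply: (eq_from_nth (x0 := x0)); first by rewrite size_tuple.
move=> i; rewrite size_tuple => iN.
by rewrite -(tnth_nth x0 _ (Ordinal iN)) tnth_mktuple.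
Qed.

Lemma dyck_count n : 2 <= n -> ~~ odd n -> 'C(n, n./2) <= #|dyck n| * (2 * (n - 1)).
Proof.
move=> n2 ev.
have hn := even_halfK ev.
rewrite -card_bal2.
have -> : 2 * (n - 1) = #|[set: bool * 'I_n.-1]| by rewrite cardsT card_prod card_bool card_ord; lia.
rewrite -cardsX.
apply: leq_trans (leq_imset_card (@Gdec n) _).
apply: subset_leq_card; apply/subsetP => w; rewrite inE => bw.
set b := heavy2 (last ord0 w).
pose w' := if b then map flip w else (w : seq _).
have sw' : size w' = n by rewrite /w'; case: (b); rewrite ?size_map size_tuple.
have ow' : ones w' = n./2.
  rewrite /w'; case: (b); last exact/eqP.
  rewrite count_map.
  have := count_predC heavy2 w; rewrite size_tuple (eqP bw).
  have -> : count (preim flip heavy2) w = count (predC heavy2) w.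
    by apply: eq_count => x; rewrite /= /flip heavy2_b2.
  lia.
have lw' : last ord0 w' = ord0.
  rewrite /w' /b; case: ifP => hb.
    have : size w = n by rewrite size_tuple.
    move: hb; case: (tval w) => [|x s] /=; first by lia.
    by move=> hb _; rewrite last_map /flip hb.
  by move: hb; case: (last ord0 w) => [[|[|k]] h] //= _; apply: val_inj.
pose u := take n.-1 w'.
have su : size u = n.-1 by rewrite size_takel // sw'; lia.
have ew' : w' = u ++ [:: ord0].
  apply: (eq_from_nth (x0 := ord0)); first by rewrite size_cat su sw' /=; lia.
  move=> i; rewrite sw' => iN; rewrite nth_cat su.
  case: ifP => hi; first by rewrite nth_take.
  have -> : i = (size w').-1 by rewrite sw'; lia.
  by rewrite nth_last lw' sw' subnn.
have tu : 2 * ones u = n.-1.+1.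
  move: ow'; rewrite ew' count_cat /=; lia.
have [r rN hr] := cycle_lemma su ltac:(lia) tu.
pose v := rot r u ++ [:: ord0].
have sv : size v = n by rewrite size_cat size_rot su /=; lia.
pose d := [tuple nth ord0 v i | i < n].
have dv : val d = v by apply: mktuple_nth.
apply/imsetP; exists (d, (b, Ordinal rN)).
  apply/setXP; split => //; rewrite inE; apply/andP; split.
    rewrite /balanced_word dv count_cat.
    have hp : perm_eq (rot r u) u by rewrite perm_rot.
    rewrite (permP hp) /=; move: tu; lia.
  apply/forallP => j; apply/implyP => j0.
  rewrite dv takel_cat ?size_rot ?su; last by have := ltn_ord j; lia.
  apply: hr => //; have := ltn_ord j; lia.
apply: val_inj; rewrite /Gdec.
have hg : gdec d b r = w.
  rewrite /gdec dv take_size_cat ?size_rot // rotK -ew' /w'.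
  by case: (b) => //; rewrite (mapK flipK).
by rewrite mktuple_nth /= hg // size_tuple.
Qed.

Definition goodE n p k (e : n.-tuple 'I_2) : bool :=
  [forall r : 'I_k, ~~ heavy2 (nth ord0 e r)] && heavy2 (nth ord0 e p.-1) &&
  [forall i : 'I_p, (0 < i) ==> (i + k <= p) ==> [exists r : 'I_k, heavy2 (nth ord0 e (i + r))]].
Definition Eset n p k : {set n.-tuple 'I_2} := [set e | goodE p k e].

Lemma Eset_wmu n kappa p k : 0 < k -> n - kappa < p -> p <= kappa -> wmu_code kappa (Eset n p k).
Proof.
move=> k0 hp1 hp2; apply: wmuI => a b; rewrite !inE => /andP[/andP[za ha] wa] /andP[/andP[zb hb] wb] l kl ln.
apply/negP => /eqP /(take_drop_nthP ord0 (size_tuple _) (size_tuple _) (ltnW ln)) e.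
case: (ltnP (p - (n - l)) k) => hk.
  have hj : (p - (n - l)).-1 < k by lia.
  have := e (p - (n - l)).-1 ltac:(lia).
  have -> : n - l + (p - (n - l)).-1 = p.-1 by lia.
  have := (forallP za) (Ordinal hj) => /= z eq.
  by rewrite eq hb in z.
have hi : n - l < p by lia.
have := (forallP wb) (Ordinal hi) => /implyP /(_ ltac:(simpl; lia)) /implyP /(_ ltac:(simpl; lia)) /existsP [r hr].
have := e r ltac:(have := ltn_ord r; lia).
have := (forallP za) r => z eq.
by rewrite eq /= hr in z.
Qed.

Lemma Eset_small n p : 2 <= p -> p <= n -> 2 ^ (n - p) <= #|Eset n p p.-1|.
Proof.
move=> p2 pn.
pose s (y : (n - p).-tuple 'I_2) := rcons (nseq p.-1 ord0) (ord_max : 'I_2) ++ y.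
have ss : forall y, size (s y) = n by move=> y; rewrite size_cat size_rcons size_nseq size_tuple; lia.
pose F y : n.-tuple 'I_2 := [tuple nth ord0 (s y) i | i < n].
have FE : forall y, val (F y) = s y by move=> y; apply: mktuple_nth.
rewrite -[X in X ^ _](card_ord 2) -card_tuple -cardsT -(card_in_imset (f := F)).
  apply: subset_leq_card; apply/subsetP => e /imsetP [y _ ->].
  have hn : forall i, nth ord0 (F y) i = if i < p.-1 then ord0 else if i == p.-1 then ord_max else nth ord0 y (i - p).
    move=> i; rewrite FE /s nth_cat size_rcons size_nseq nth_rcons size_nseq nth_nseq.
    have -> : p.-1.+1 = p by lia.
    case: (ltngtP i p.-1) => h.
    - by have -> : i < p by lia.
    - by have -> : (i < p) = false by apply/negbTE; lia.
    - by have -> : i < p by lia.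
  rewrite /Eset inE /goodE; apply/andP; split; first (apply/andP; split).
  - by apply/forallP => r; rewrite hn ltn_ord.
  - by rewrite hn ltnn eqxx.
  - apply/forallP => i; apply/implyP => i0; apply/implyP => ik.
    have hk : p.-2 < p.-1 by lia.
    apply/existsP; exists (Ordinal hk); rewrite hn /=.
    have -> : i + p.-2 = p.-1 by lia.
    by rewrite ltnn eqxx.
move=> y1 y2 _ _ /(congr1 val); rewrite !FE /s => /(congr1 (drop p)).
rewrite !drop_size_cat ?size_rcons ?size_nseq; try lia.
by move=> e; apply: val_inj.
Qed.

Lemma card_exists_le (T : finType) (P : nat -> pred T) L :
  #|[set y | [exists j : 'I_L, P j y]]| <= \sum_(j < L) #|[set y | P j y]|.
Proof.
elim: L => [|L IH].
  rewrite big_ord0 leqn0 cards_eq0; apply/eqP/setP => y; rewrite !inE.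
  by apply/existsP => [[[j hj]]].
rewrite big_ord_recr /=.
have -> : [set y | [exists j : 'I_L.+1, P j y]] = [set y | [exists j : 'I_L, P j y]] :|: [set y | P L y].
  apply/setP => y; rewrite !inE; apply/existsP/orP.
    move=> [[j hj] hP]; case: (ltnP j L) => hjL.
      by left; apply/existsP; exists (Ordinal hjL).
    by right; have -> : L = j by lia.
  case=> [/existsP [[j hj] hP] | hP].
    have hj' : j < L.+1 by lia.
    by exists (Ordinal hj').
  by exists ord_max.
rewrite cardsU; apply: leq_trans (leq_subr _ _) _.
by rewrite leq_add2r.
Qed.

Lemma I2_not_heavy (x : 'I_2) : ~~ heavy2 x -> x = ord0.
Proof. by case: x => [[|[|k]] h] //= _; apply: val_inj. Qed.

Lemma window_card M k j : j + k <= M ->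
  #|[set y : M.-tuple 'I_2 | [forall r : 'I_k, ~~ heavy2 (nth ord0 y (j + r))]]| <= 2 ^ (M - k).
Proof.
move=> jkM.
pose t (y : M.-tuple 'I_2) := take j y ++ drop (j + k) y.
have st : forall y, size (t y) = M - k.
  by move=> y; rewrite size_cat size_takel ?size_drop ?size_tuple; lia.
pose g y : (M - k).-tuple 'I_2 := [tuple nth ord0 (t y) i | i < M - k].
rewrite -[X in X ^ _](card_ord 2) -card_tuple -cardsT -(card_in_imset (f := g)).
  exact: subset_leq_card (subsetT _).
have mid : forall y : M.-tuple 'I_2, [forall r : 'I_k, ~~ heavy2 (nth ord0 y (j + r))] ->
    take k (drop j y) = nseq k ord0.
  move=> y /forallP hy; apply: (eq_from_nth (x0 := ord0)).
    by rewrite size_nseq size_takel // size_drop size_tuple; lia.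
  move=> r; rewrite size_takel ?size_drop ?size_tuple; last by lia.
  move=> rk; rewrite nth_take // nth_drop nth_nseq rk.
  exact: (I2_not_heavy (hy (Ordinal rk))).
move=> y1 y2; rewrite !inE => h1 h2 /(congr1 val).
rewrite /g !mktuple_nth // /t => /eqP; rewrite eqseq_cat; last by rewrite !size_takel ?size_tuple; lia.
move=> /andP [/eqP e1 /eqP e2]; apply: val_inj => /=.
rewrite -(cat_take_drop j y1) -(cat_take_drop j y2) e1; congr (_ ++ _).
rewrite -(cat_take_drop k (drop j y1)) -(cat_take_drop k (drop j y2)) !drop_drop (mid _ h1) (mid _ h2).
by rewrite addnC e2.
Qed.

Lemma Eset_big n p k : 0 < k -> k + 2 <= p -> p <= n ->
  2 ^ (n - k - 2) <= #|Eset n p k| + (p - k - 2) * 2 ^ (n - k - 2 - k).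
Proof.
move=> k0 kp pn.
set M := n - k - 2; set L := p - k - 2.
pose s (y : M.-tuple 'I_2) := rcons (nseq k ord0) (ord_max : 'I_2) ++ (take L y ++ (ord_max : 'I_2) :: drop L y).
have ss : forall y, size (s y) = n.
  move=> y; rewrite /s size_cat size_rcons size_nseq size_cat /= size_takel ?size_drop size_tuple; lia.
pose F y : n.-tuple 'I_2 := [tuple nth ord0 (s y) i | i < n].
have FE : forall y, val (F y) = s y by move=> y; apply: mktuple_nth.
have hn1 : forall y i, i < k -> nth ord0 (F y) i = ord0.
  move=> y i ik; rewrite FE /s nth_cat size_rcons size_nseq ifT; last by lia.
  by rewrite nth_rcons size_nseq ik nth_nseq ik.
have hn2 : forall y, nth ord0 (F y) k = ord_max.
  move=> y; rewrite FE /s nth_cat size_rcons size_nseq ifT; last by lia.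
  by rewrite nth_rcons size_nseq ltnn eqxx.
have hn3 : forall y i, k < i -> i < p.-1 -> nth ord0 (F y) i = nth ord0 y (i - k.+1).
  move=> y i h1 h2; rewrite FE /s nth_cat size_rcons size_nseq ifF; last by apply/negbTE; lia.
  rewrite nth_cat size_takel ?size_tuple; last by lia.
  by rewrite ifT ?nth_take //; lia.
have hn4 : forall y, nth ord0 (F y) p.-1 = ord_max.
  move=> y; rewrite FE /s nth_cat size_rcons size_nseq ifF; last by apply/negbTE; lia.
  rewrite nth_cat size_takel ?size_tuple; last by lia.
  by rewrite ifF; [have -> : p.-1 - k.+1 - L = 0 by lia | apply/negbTE; lia].
pose ok (y : M.-tuple 'I_2) := [forall j : 'I_L, (j + k <= L) ==> [exists r : 'I_k, heavy2 (nth ord0 y (j + r))]].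
have okE : forall y, ok y -> F y \in Eset n p k.
  move=> y /forallP hy; rewrite /Eset inE /goodE; apply/andP; split; first (apply/andP; split).
  - by apply/forallP => r; rewrite hn1.
  - by rewrite hn4.
  - apply/forallP => i; apply/implyP => i0; apply/implyP => ik.
    have hi := ltn_ord i.
    case: (leqP i k) => hik.
      have hr : k - i < k by lia.
      apply/existsP; exists (Ordinal hr) => /=.
      have -> : i + (k - i) = k by lia.
      by rewrite hn2.
    case: (ltnP (i + k) p) => hip.
      have hj : i - k.+1 < L by lia.
      have := hy (Ordinal hj) => /implyP /(_ ltac:(simpl; lia)) /existsP [r hr].
      apply/existsP; exists r; rewrite hn3; [|lia|have := ltn_ord r; lia].
      by have -> : i + r - k.+1 = i - k.+1 + r by lia.
    have hr : k.-1 < k by lia.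
    apply/existsP; exists (Ordinal hr) => /=.
    have -> : i + k.-1 = p.-1 by lia.
    by rewrite hn4.
have Finj : injective F.
  move=> y1 y2 /(congr1 val); rewrite !FE /s => /eqP.
  rewrite eqseq_cat // => /andP [_ /eqP].
  move/eqP; rewrite eqseq_cat; last by rewrite !size_takel ?size_tuple; lia.
  move=> /andP [/eqP e1 /eqP [e2]]; apply: val_inj => /=.
  by rewrite -(cat_take_drop L y1) -(cat_take_drop L y2) e1 e2.
have c1 : #|[set y | ok y]| <= #|Eset n p k|.
  rewrite -(card_imset _ Finj); apply: subset_leq_card; apply/subsetP => e /imsetP [y].
  by rewrite inE => hy ->; apply: okE.
have c2 : #|[set y | ~~ ok y]| <= L * 2 ^ (M - k).
  pose P := fun j (y : M.-tuple 'I_2) => (j + k <= L) && [forall r : 'I_k, ~~ heavy2 (nth ord0 y (j + r))].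
  have c2a : #|[set y | ~~ ok y]| <= #|[set y | [exists j : 'I_L, P j y]]|.
    apply: subset_leq_card; apply/subsetP => y; rewrite !inE => /forallPn [j].
    rewrite negb_imply => /andP [hj /existsPn hr].
    by apply/existsP; exists j; rewrite /P hj; apply/forallP.
  have c2b := card_exists_le P L.
  have c2c : \sum_(j < L) #|[set y | P j y]| <= L * 2 ^ (M - k).
    rewrite -[X in X * _](card_ord L) -sum_nat_const; apply: leq_sum => j _.
    case: (leqP (j + k) L) => hj.
      apply: (leq_trans _ (window_card (M := M) (k := k) (j := j) _)); last by lia.
      by apply: subset_leq_card; apply/subsetP => y; rewrite !inE /P hj.
    have -> : [set y | P j y] = set0 by apply/setP => y; rewrite !inE /P leqNgt hj.
    by rewrite cards0.
  lia.
have c3 : #|[set y | ok y]| + #|[set y | ~~ ok y]| = 2 ^ M.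
  rewrite -[X in X ^ _](card_ord 2) -card_tuple -(cardsC [set y | ok y]).
  by congr (_ + _); apply: eq_card => y; rewrite !inE.
lia.
Qed.

Lemma wmu_mono (T : finType) n k k' (C : {set n.-tuple T}) : k <= k' -> wmu_code k C -> wmu_code k' C.
Proof.
move=> kk h; apply: wmuI => a b aC bC l kl ln; apply: (wmuP h aC bC) => //; lia.
Qed.

Lemma exp_big p : 7 <= p -> 4 * p < 2 ^ p.-1.
Proof.
elim: p => // p IH hp.
case: (ltngtP p 6) => h; first lia.
  have := IH h; rewrite /=; have -> : p = p.-1.+1 by lia.
  rewrite expnS /=; lia.
by rewrite h.
Qed.

Lemma A_upper (T : finType) (heavy : pred T) kappa n X :
  1 <= kappa -> kappa < n ->
  #|[set w : n.-tuple T | balanced_word heavy w]| <= X ->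
  A_bal_wmu heavy kappa n * (n - kappa + 1) <= X.
Proof.
move=> k1 kn hX.
have hpos : 0 < n - kappa + 1 by lia.
have : A_bal_wmu heavy kappa n <= X %/ (n - kappa + 1).
  apply/bigmax_leqP => C /andP [bC wC].
  rewrite leq_divRL //; apply: leq_trans hX; exact: rot_bound.
rewrite leq_divRL // => h; exact: h.
Qed.

Lemma A_lower (T : finType) (heavy : pred T) kappa n (C : {set n.-tuple T}) :
  balanced_code heavy C -> wmu_code kappa C -> #|C| <= A_bal_wmu heavy kappa n.
Proof.
move=> bC wC; rewrite /A_bal_wmu.
by apply: (leq_bigmax_cond (P := fun C => balanced_code heavy C && wmu_code kappa C) (F := fun C => #|C|)); rewrite bC wC.
Qed.

Lemma small_arith q : 2 <= q -> q <= 6 -> 3 * 2 ^ q <= 64 * q.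
Proof. by case: q => [|[|[|[|[|[|[|q]]]]]]]. Qed.

Lemma marker n kappa : 1 <= kappa -> kappa < n -> 32 * (n - kappa + 1) < 3 * (n - 1) ->
  exists E : {set n.-tuple 'I_2}, wmu_code kappa E /\ 3 * 2 ^ n <= 64 * (n - kappa + 1) * #|E|.
Proof.
move=> k1 kn hB.
have p2 : 2 <= n - kappa + 1 by lia.
have pn : 2 * (n - kappa + 1) <= n by lia.
move: p2 pn; set p := n - kappa + 1 => p2 pn.
have pk : n - kappa < p by lia.
have pk2 : p <= kappa by lia.
case: (leqP p 6) => hp.
  exists (Eset n p p.-1); split; first by apply: Eset_wmu; lia.
  have h := @Eset_small n p p2 ltac:(lia).
  have ha := small_arith p2 hp.
  have -> : 2 ^ n = 2 ^ p * 2 ^ (n - p) by rewrite -expnD; congr (2 ^ _); lia.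
  move: h ha; move: (2 ^ p) (2 ^ (n - p)) #|Eset n p p.-1| => P Z E h ha.
  nia.
set k := trunc_log 2 (4 * p).
have hk1 : 2 ^ k <= 4 * p by apply: trunc_logP; lia.
have hk2 : 4 * p < 2 ^ k.+1 by apply: trunc_log_ltn.
have hk3 := exp_big hp.
have k0 : 0 < k.
  rewrite lt0n; apply/negP => /eqP k0; rewrite k0 in hk2; rewrite expn1 in hk2; lia.
have kp : k + 2 <= p.
  have : 2 ^ k < 2 ^ p.-1 by lia.
  rewrite ltn_exp2l //; lia.
exists (Eset n p k); split; first by apply: Eset_wmu.
have h := @Eset_big n p k k0 kp ltac:(lia).
have e1 : 2 ^ (n - k - 2) = 2 ^ (n - k - 2 - k) * 2 ^ k by rewrite -expnD; congr (2 ^ _); lia.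
have e2 : 2 ^ n = 2 ^ (n - k - 2 - k) * 2 ^ k * 2 ^ k * 4 by rewrite -!expnD -[4]/(2 ^ 2) -expnD; congr (2 ^ _); lia.
rewrite e1 in h; rewrite e2; rewrite expnS in hk2.
have hL : p - k - 2 <= p by lia.
move: h hk1 hk2 hL; move: (2 ^ (n - k - 2 - k)) (2 ^ k) #|Eset n p k| (p - k - 2) => Z X E L h hk1 hk2 hL.
have key : 12 * X * X + 64 * p * L <= 64 * p * X by nia.
have key2 : Z * (12 * X * X + 64 * p * L) <= Z * (64 * p * X) by rewrite leq_mul2l key orbT.
have h2 : 64 * p * (Z * X) <= 64 * p * (E + L * Z) by rewrite leq_mul2l h orbT.
nia.
Qed.

Import Order.TTheory GRing.Theory Num.Theory.

Lemma A_mu_eq (T : finType) (heavy : pred T) n : A_bal_mu heavy n = A_bal_wmu heavy 1 n.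
Proof. by rewrite /A_bal_mu /A_bal_wmu /mu_code. Qed.

Lemma rat_le_div (A X d : nat) : (0 < d)%N -> (A * d <= X)%N -> (A%:R <= X%:R / d%:R :> rat)%R.
Proof. move=> d0 h; rewrite ler_pdivlMr; last by rewrite ltr0n. by rewrite -natrM ler_nat. Qed.
Lemma rat_div_le (A X d : nat) : (0 < d)%N -> (X <= A * d)%N -> (X%:R / d%:R <= A%:R :> rat)%R.
Proof. move=> d0 h; rewrite ler_pdivrMr; last by rewrite ltr0n. by rewrite -natrM ler_nat. Qed.
Lemma rat_c2 (A X d : nat) : (0 < d)%N -> (3 * X <= 64 * d * A)%N ->
  ((3%:R / 64%:R : rat) * X%:R / d%:R <= A%:R)%R.
Proof.
move=> d0 h; rewrite ler_pdivrMr; last by rewrite ltr0n.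
rewrite mulrAC ler_pdivrMr; last by rewrite ltr0n.
rewrite -!natrM ler_nat.
move: h; lia.
Qed.

Local Open Scope ring_scope.

Theorem theorem6 (n kappa : nat) :
  (2 <= n)%N -> ~~ odd n -> (1 <= kappa)%N -> (kappa < n)%N ->
  [/\ (3%:R / 64%:R : rat) * ('C(n, n./2) * 2 ^ n)%:R / (n - kappa + 1)%:R
        <= (A_bal_wmu heavyGC kappa n)%:R,
      (A_bal_wmu heavyGC kappa n)%:R
        <= ('C(n, n./2) * 2 ^ n)%:R / (n - kappa + 1)%:R :> rat,
      (A_bal_wmu heavy2 kappa n)%:R
        <= ('C(n, n./2))%:R / (n - kappa + 1)%:R :> rat,
      ('C(n, n./2))%:R / (2 * (n - 1))%:R <= (A_bal_mu heavy2 n)%:R :> rat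
    & (A_bal_mu heavy2 n)%:R <= ('C(n, n./2))%:R / n%:R :> rat].
Proof.
move=> n2 ev k1 kn.
have d0 : (0 < n - kappa + 1)%N by lia.
have hD := dyck_count n2 ev.
have A2up : forall k, (1 <= k)%N -> (k < n)%N -> (A_bal_wmu heavy2 k n * (n - k + 1) <= 'C(n, n./2))%N.
  by move=> k hk1 hk2; apply: A_upper => //; rewrite card_bal2.
have hmu : (#|dyck n| <= A_bal_mu heavy2 n)%N by rewrite A_mu_eq; exact: (A_lower (dyck_bal n) (dyck_mu ev)).
split.
- apply: rat_c2 => //.
  case: (leqP (3 * (n - 1)) (32 * (n - kappa + 1))) => hc.
    have hl := A_lower (comb_bal [set: n.-tuple 'I_2] (dyck_bal n))
                       (comb_wmu (H := dyck n) (E := [set: n.-tuple 'I_2]) (or_introl (wmu_mono k1 (dyck_mu ev)))).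
    rewrite comb_card cardsT card_tuple card_ord in hl.
    set C := 'C(n, n./2) in hl hD *; set P := (2 ^ n)%N in hl *; set D := #|dyck n| in hl hD *; set A := A_bal_wmu heavyGC kappa n in hl *.
    have h1 : (3 * (C * P) <= 3 * (D * (2 * (n - 1))) * P)%N by rewrite mulnA leq_mul2r leq_mul2l hD !orbT.
    have h2 : (3 * (D * (2 * (n - 1))) * P <= 64 * (n - kappa + 1) * (D * P))%N.
      have : (3 * (2 * (n - 1)) <= 64 * (n - kappa + 1))%N by lia.
      move=> hab.
      have -> : (3 * (D * (2 * (n - 1))) * P = (3 * (2 * (n - 1))) * (D * P))%N by lia.
      by rewrite leq_mul2r hab orbT.
    have h3 : (64 * (n - kappa + 1) * (D * P) <= 64 * (n - kappa + 1) * A)%N by rewrite leq_mul2l hl orbT.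
    lia.
  have [E [wE hE]] := marker k1 kn hc.
  have bB : balanced_code heavy2 [set w : n.-tuple 'I_2 | balanced_word heavy2 w].
    by apply/forall_inP => w; rewrite inE.
  have hl := A_lower (comb_bal E bB) (comb_wmu (H := [set w : n.-tuple 'I_2 | balanced_word heavy2 w]) (or_intror wE)).
  rewrite comb_card card_bal2 in hl.
  set C := 'C(n, n./2) in hl *; set P := (2 ^ n)%N in hE *; set e := #|E| in hl hE *; set A := A_bal_wmu heavyGC kappa n in hl *.
  have h1 : (C * (3 * P) <= C * (64 * (n - kappa + 1) * e))%N by rewrite leq_mul2l hE orbT.
  have h3 : (64 * (n - kappa + 1) * (C * e) <= 64 * (n - kappa + 1) * A)%N by rewrite leq_mul2l hl orbT.
  lia.
- apply: rat_le_div => //; apply: A_upper => //; exact: card_bal4.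
- apply: rat_le_div => //; exact: A2up.
- apply: rat_div_le; first lia.
  apply: leq_trans hD _; by rewrite leq_mul2r hmu orbT.
- apply: rat_le_div; first lia.
  rewrite A_mu_eq; have := A2up 1%N (leqnn 1) ltac:(lia).
  by have -> : (n - 1 + 1 = n)%N by lia.
Qed.
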